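(* Let $f_1 \in \mathcal{F}_{\mu_1,L_1}(\mathbb{R}^d)$ and $f_2 \in \mathcal{F}_{\mu_2,L_2}(\mathbb{R}^d)$ with $\mu_1 \in [0,\infty)$, $L_1 \in (\mu_1,\infty]$, $\mu_2 \in \mathbb{R}$, $L_2 \in (\mu_2,\infty]$, such that $F = f_1 - f_2$ is bounded below, $\emptyset \ne \operatorname{dom}\partial f_1 \subseteq \operatorname{dom}\partial f_2$ and $\operatorname{range}\partial f_2 \subseteq \operatorname{range}\partial f_1$. Assume at least one of $f_1, f_2$ is smooth (i.e. $L_1<\infty$ or $L_2<\infty$), and assume $\mu_1 + \mu_2 > 0$ or $\mu_1 = \mu_2 = 0$. Let $x \in \operatorname{dom}\partial f_1$, let $g_2 \in \partial f_2(x)$ be the subgradient selected in one DCA iteration and $x^+ \in \operatorname{argmin}_w\{f_1(w) - \langle g_2, w\rangle\}$ the resulting point, so that $g_1^+ := g_2 \in \partial f_1(x^+)$. Let $g_1 \in \partial f_1(x)$ and $g_2^+ \in \partial f_2(x^+)$ be arbitrary. Set $B := \mu_1^{-1} + \mu_2^{-1} + L_2^{-1}$ and $E := \frac{L_2+\mu_2}{L_1 L_2}\cdot\frac{L_2 - L_1}{-\mu_2} + \mu_1^{-1} - L_1^{-1}$. Then for each $i \in \{1,\dots,6\}$ such that the parameters lie in the domain $D_i$ below, $$F(x) - F(x^+) \ge \sigma_i \tfrac12 \|g_1 - g_2\|^2 + \sigma_i^+ \tfrac12 \|g_1^+ - g_2^+\|^2,$$ with $\sigma_i, \sigma_i^+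 \ge 0$ given by: (1) $\sigma_1 = L_2^{-1}\frac{L_2-\mu_1}{L_1-\mu_1}$, $\sigma_1^+ = L_2^{-1}\Big(1 + \frac{L_2^{-1} - L_1^{-1}}{\mu_1^{-1} - L_1^{-1}}\Big)$; $D_1$: $L_1 \ge L_2 \ge \mu_1 \ge 0$, $L_1 > \mu_2$, and either $\mu_2 \ge 0$, or $\mu_2 < 0$ and $E \le 0$. (2) $\sigma_2 = L_1^{-1}\Big(1 + \frac{L_1^{-1} - L_2^{-1}}{\mu_2^{-1} - L_2^{-1}}\Big)$, $\sigma_2^+ = L_1^{-1}\frac{L_1-\mu_2}{L_2-\mu_2}$; $D_2$: $L_2 \ge L_1 \ge \mu_2 \ge 0$, $L_2 > \mu_1$, $\mu_1 \ge 0$. (3) $\sigma_3 = \frac{L_1^{-1} B}{B - L_1^{-1}}$, $\sigma_3^+ = \frac{1}{L_2+\mu_2}$; $D_3$: $\mu_2<0$, $\mu_1>0$, $L_2>\mu_1$, $L_1>\mu_2$, $B \le 0$, and either ($L_1 \ge L_2$ and $E \ge 0$) or $L_2 > L_1$. (4) $\sigma_4 = 0$, $\sigma_4^+ = \frac{\mu_1+\mu_2}{\mu_2^2}$; $D_4$: $\mu_2<0$, $\mu_1>0$, $L_1>\mu_2$, and either ($B>0$ and $L_2 > \mu_1$), or ($B>0$ and $0<L_2 \le \mu_1$), or ($B \le 0$ and $L_2 \le 0$). (5) $\sigma_5 = 0$, $\sigma_5^+ = \frac{L_2+\mu_1}{L_2^2}$; $D_5$: $L_1 > \mu_1 \ge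 L_2 > 0$, $L_1 > \mu_2$, and either $\mu_2 \ge 0$, or $\mu_2<0$ and $B \le 0$. (6) $\sigma_6 = \frac{L_1+\mu_2}{L_1^2}$, $\sigma_6^+ = 0$; $D_6$: $L_2 > \mu_2 \ge L_1 > \mu_1 \ge 0$.
   Context: For $\mu \in \mathbb{R}$ and $L \in (\mu,\infty]$, $\mathcal{F}_{\mu,L}(\mathbb{R}^d)$ is the class of proper lower semicontinuous $f:\mathbb{R}^d\to\mathbb{R}$ with $f - \frac{\mu}{2}\|\cdot\|^2$ convex and, if $L<\infty$, $\frac{L}{2}\|\cdot\|^2 - f$ convex (no upper condition when $L = \infty$); $L$ may be nonpositive. For such $f$, $\partial f(x) = \{g + \mu x : g \in \partial(f - \frac{\mu}{2}\|\cdot\|^2)(x)\}$ with the convex subdifferential; $\partial f(x) = \{\nabla f(x)\}$ where $f$ is differentiable. $\operatorname{dom}\partial f = \{x : \partial f(x)\neq\emptyset\}$, $\operatorname{range}\partial f = \bigcup_x \partial f(x)$. A function is smooth if it is differentiable with Lipschitz gradient (here: its upper curvature $L$ is finite). Conventions: $1/\infty = 0$, and expressions involving an infinite parameter are understood as their limits. *)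

(* Defs.v *)
From HB Require Import structures.
From mathcomp Require Import all_boot all_order all_algebra.
From mathcomp Require Import all_classical all_reals all_analysis.
Set Implicit Arguments. Unset Strict Implicit. Unset Printing Implicit Defensive.
Import Order.TTheory GRing.Theory Num.Theory.
Import numFieldNormedType.Exports.
Local Open Scope ring_scope.

Section Defs.
Variables (R : realType) (d : nat).
Notation V := 'rV[R]_d.

Definition dotv (u v : V) : R := \sum_(i < d) u 0 i * v 0 i.
Definition sqnorm (u : V) : R := dotv u u.

Definition convexf (h : V -> R) : Prop :=
  forall (x y : V) (t : R), 0 <= t <= 1 ->
    h (t *: x + (1 - t) *: y) <= t * h x + (1 - t) * h y.

(* The class F_{mu,L}(R^d); L = +oo means "no upper condition".
   f : R^d -> R is real valued, hence proper. *)
Definition inF (mu : R) (L : \bar R) (f : V -> R) : Prop :=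
  [/\ lower_semicontinuous (fun x => (f x)%:E),
      convexf (fun x => f x - mu / 2 * sqnorm x),
      (mu%:E < L)%E
    & forall L' : R, L = L'%:E -> convexf (fun x => L' / 2 * sqnorm x - f x)].

(* g \in \partial f(x) for f in F_{mu,L}:
   g = g' + mu x with g' in the convex subdifferential of f - mu/2 ||.||^2 *)
Definition subdiff (mu : R) (f : V -> R) (x g : V) : Prop :=
  forall y : V, f x - mu / 2 * sqnorm x + dotv (g - mu *: x) (y - x)
                <= f y - mu / 2 * sqnorm y.

End Defs.

Section Constants.
Variable R : realType.
Local Open Scope ring_scope.

Definition einv (L : \bar R) : R :=
  match L with r%:E => r^-1 | _ => 0 end.

(* B := mu1^-1 + mu2^-1 + L2^-1.  Only used when mu1 > 0 and mu2 < 0.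
   At L2 = 0 (possible only in D4, third alternative, where L2 <= 0) we take the
   limit L2 -> 0^-, i.e. B = -oo. *)
Definition Bc (mu1 mu2 : R) (L2 : \bar R) : \bar R :=
  if L2 == 0%E then -oo%E else (mu1^-1 + mu2^-1 + einv L2)%:E.

(* E := (L2+mu2)/(L1 L2) * (L2-L1)/(-mu2) + mu1^-1 - L1^-1, only used when
   mu2 < 0 and L2 > 0.  Infinite parameters: value = limit.
   mu1 = 0 gives mu1^-1 = +oo, hence E = +oo.  The case L1 = L2 = +oo is
   excluded by the smoothness assumption (arbitrary value). *)
Definition Ec (mu1 mu2 : R) (L1 L2 : \bar R) : \bar R :=
  if mu1 == 0 then +oo%E else
  match L1, L2 with
  | r1%:E, r2%:E =>
      ((r2 + mu2) / (r1 * r2) * ((r2 - r1) / (- mu2)) + mu1^-1 - r1^-1)%:E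
  | +oo%E, r2%:E => ((r2 + mu2) / (r2 * mu2) + mu1^-1)%:E
  | r1%:E, +oo%E => +oo%E (* limit L2 -> oo, as mu2 < 0 *)
  | _, _ => +oo%E
  end.

Definition sigma1 (mu1 : R) (L1 L2 : \bar R) : R :=
  match L1, L2 with
  | r1%:E, r2%:E => r2^-1 * ((r2 - mu1) / (r1 - mu1))
  | +oo%E, r2%:E => 0
  | r1%:E, +oo%E => (r1 - mu1)^-1
  | _, _ => 0
  end.
(* sigma_1^+ = L2^-1 (1 + (L2^-1 - L1^-1)/(mu1^-1 - L1^-1)), mu1^-1 = +oo if mu1 = 0 *)
Definition sigma1p (mu1 : R) (L1 L2 : \bar R) : R :=
  if mu1 == 0 then einv L2
  else einv L2 * (1 + (einv L2 - einv L1) / (mu1^-1 - einv L1)).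

(* sigma_2 = L1^-1 (1 + (L1^-1 - L2^-1)/(mu2^-1 - L2^-1)), mu2^-1 = +oo if mu2 = 0 *)
Definition sigma2 (mu2 : R) (L1 L2 : \bar R) : R :=
  if mu2 == 0 then einv L1
  else einv L1 * (1 + (einv L1 - einv L2) / (mu2^-1 - einv L2)).
Definition sigma2p (mu2 : R) (L1 L2 : \bar R) : R :=
  match L1, L2 with
  | r1%:E, r2%:E => r1^-1 * ((r1 - mu2) / (r2 - mu2))
  | r1%:E, +oo%E => 0
  | +oo%E, r2%:E => (r2 - mu2)^-1
  | _, _ => 0
  end.

(* sigma_3 = L1^-1 B / (B - L1^-1) (B is finite on D3) *)
Definition sigma3 (mu1 mu2 : R) (L1 L2 : \bar R) : R :=
  let B := mu1^-1 + mu2^-1 + einv L2 in einv L1 * B / (B - einv L1).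
Definition sigma3p (mu2 : R) (L2 : \bar R) : R := einv (L2 + mu2%:E)%E.

Definition sigma4 : R := 0.
Definition sigma4p (mu1 mu2 : R) : R := (mu1 + mu2) / mu2 ^+ 2.

Definition sigma5 : R := 0.
(* sigma_5^+ = (L2+mu1)/L2^2 (limit 0 at L2 = +oo) *)
Definition sigma5p (mu1 : R) (L2 : \bar R) : R :=
  match L2 with r2%:E => (r2 + mu1) / r2 ^+ 2 | _ => 0 end.

(* sigma_6 = (L1+mu2)/L1^2 (limit 0 at L1 = +oo) *)
Definition sigma6 (mu2 : R) (L1 : \bar R) : R :=
  match L1 with r1%:E => (r1 + mu2) / r1 ^+ 2 | _ => 0 end.
Definition sigma6p : R := 0.

Local Open Scope ereal_scope.
Definition D1 (mu1 mu2 : R) (L1 L2 : \bar R) : Prop :=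
  [/\ L2 <= L1, mu1%:E <= L2, (0 <= mu1)%R, mu2%:E < L1
    & (0 <= mu2)%R \/ ((mu2 < 0)%R /\ Ec mu1 mu2 L1 L2 <= 0)].
Definition D2 (mu1 mu2 : R) (L1 L2 : \bar R) : Prop :=
  [/\ L1 <= L2, mu2%:E <= L1, (0 <= mu2)%R, mu1%:E < L2 & (0 <= mu1)%R].
Definition D3 (mu1 mu2 : R) (L1 L2 : \bar R) : Prop :=
  [/\ (mu2 < 0)%R, (0 < mu1)%R, mu1%:E < L2, mu2%:E < L1
    & Bc mu1 mu2 L2 <= 0 /\
      ((L2 <= L1 /\ 0 <= Ec mu1 mu2 L1 L2) \/ L1 < L2)].
Definition D4 (mu1 mu2 : R) (L1 L2 : \bar R) : Prop :=
  [/\ (mu2 < 0)%R, (0 < mu1)%R, mu2%:E < L1 &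
      [\/ 0 < Bc mu1 mu2 L2 /\ mu1%:E < L2,
          0 < Bc mu1 mu2 L2 /\ (0 < L2 /\ L2 <= mu1%:E)
        | Bc mu1 mu2 L2 <= 0 /\ L2 <= 0]].
Definition D5 (mu1 mu2 : R) (L1 L2 : \bar R) : Prop :=
  [/\ mu1%:E < L1, L2 <= mu1%:E, 0 < L2, mu2%:E < L1
    & (0 <= mu2)%R \/ ((mu2 < 0)%R /\ Bc mu1 mu2 L2 <= 0)].
Definition D6 (mu1 mu2 : R) (L1 L2 : \bar R) : Prop :=
  [/\ mu2%:E < L2, L1 <= mu2%:E, mu1%:E < L1 & (0 <= mu1)%R].

End Constants.

(* Main.v *)
Require Import Defs.
From HB Require Import structures.
From mathcomp Require Import all_boot all_order all_algebra.
From mathcomp Require Import all_classical all_reals all_analysis.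
From mathcomp Require Import ring lra.
Import Order.TTheory GRing.Theory Num.Theory.
Import numFieldNormedType.Exports.
Local Open Scope ring_scope.

Section Scalar.
Variable R : realType.
Implicit Types (mu p s lam k l : R).

Ltac fld := field; repeat (apply/andP; split); try assumption.

Definition side mu p s lam k :=
  [/\ 0 <= lam, 0 <= k, 0 <= (1 + 2 * lam) * p - s & (lam + s * mu) ^+ 2 <= k * ((1 + 2 * lam) * p - s)].

Lemma blockA0 mu p s : s * mu = 0 -> s <= p -> side mu p s 0 0.
Proof. move=> h1 h2; split; rewrite ?add0r ?h1 ?expr0n /= ?mul0r; lra. Qed.

Lemma blockA mu p s : 0 <= s -> s < p -> side mu p s 0 ((s * mu) ^+ 2 / (p - s)).
Proof.
move=> h1 h2; have ps : 0 < p - s by lra.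
split; try lra.
- by rewrite divr_ge0 // ?sqr_ge0 ?ltW.
- rewrite add0r mulr0 addr0 mul1r mulrVK // ?unitfE ?lt0r_neq0 //.
Qed.

Lemma blockB mu l s : mu < l -> 1 <= s * l -> 1 <= s * (l + mu) ->
  side mu ((l - mu)^-1) s (s * l - 1) ((l - mu) * (s * (l + mu) - 1)).
Proof.
move=> h1 h2 h3; have lm : 0 < l - mu by lra.
have lm' : l - mu != 0 by rewrite lt0r_neq0.
have E : (1 + 2 * (s * l - 1)) * (l - mu)^-1 - s = (s * (l + mu) - 1) / (l - mu) by field.
split; rewrite ?E; try lra.
- by rewrite mulr_ge0 //; lra.
- by rewrite divr_ge0 //; lra.
- have -> : s * l - 1 + s * mu = s * (l + mu) - 1 by ring.
  have -> : (l - mu) * (s * (l + mu) - 1) * ((s * (l + mu) - 1) / (l - mu)) = (s * (l + mu) - 1) ^+ 2 by field.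
  by [].
Qed.

Lemma blockC mu p s : mu <= 0 -> 0 <= s -> s <= (1 - 2 * (s * mu)) * p ->
  side mu p s (- (s * mu)) 0.
Proof.
move=> h1 h2 h3; split; try lra.
- by rewrite oppr_ge0 mulr_ge0_le0.
Qed.

Definition cert mu1 mu2 p1 p2 s sp :=
  exists lam kap k1 k2, side mu1 p1 s lam k1 /\ side mu2 p2 sp kap k2 /\
    k1 + k2 <= mu1 + mu2 - s * mu1 ^+ 2 - sp * mu2 ^+ 2.

Definition pc (mu : R) (L : \bar R) : R := match L with r%:E => (r - mu)^-1 | _ => 0 end.

Lemma pc_ge0 mu L : (mu%:E < L)%E -> 0 <= pc mu L.
Proof. case: L => [r| |] //= h; rewrite invr_ge0; move: h; rewrite lte_fin; lra. Qed.

Lemma case6 mu1 mu2 L1 L2 : (mu1%:E < L1)%E -> (mu2%:E < L2)%E -> 0 <= mu1 ->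
  D6 mu1 mu2 L1 L2 ->
  0 <= sigma6 mu2 L1 /\ 0 <= @sigma6p R /\
  cert mu1 mu2 (pc mu1 L1) (pc mu2 L2) (sigma6 mu2 L1) (@sigma6p R).
Proof.
move=> h1 h2 m0 [a b c e].
case: L1 h1 b c => [l1| |] //= h1 b c; rewrite ?lte_fin ?lee_fin in h1 b c *.
set s := (l1 + mu2) / l1 ^+ 2.
have l0 : 0 < l1 by lra.
have l0' : l1 != 0 by rewrite lt0r_neq0.
have sl : s * l1 ^+ 2 = l1 + mu2 by rewrite /s; field.
have sl1 : s * l1 = 1 + mu2 / l1 by rewrite /s; field.
have mdl : 0 <= mu2 / l1 by rewrite divr_ge0 //; lra.
have s0 : 0 <= s by apply: divr_ge0; [lra | apply: sqr_ge0].
have sm : 0 <= s * mu1 by rewrite mulr_ge0.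
split => //; split; first by rewrite /sigma6p.
exists (s * l1 - 1), 0, ((l1 - mu1) * (s * (l1 + mu1) - 1)), 0.
rewrite /sigma6p; split; [apply: blockB | split; [apply: blockA0 | ]].
- lra.
- lra.
- rewrite mulrDr; lra.
- by rewrite mul0r.
- exact: pc_ge0.
- have -> : (l1 - mu1) * (s * (l1 + mu1) - 1) = s * l1 ^+ 2 - s * mu1 ^+ 2 - l1 + mu1 by ring.
  rewrite sl; lra.
Qed.

Lemma Bprod mu1 mu2 l2 : mu1 != 0 -> mu2 != 0 -> l2 != 0 ->
  mu1 * mu2 * l2 * (mu1^-1 + mu2^-1 + l2^-1) = mu2 * l2 + mu1 * l2 + mu1 * mu2.
Proof. by move=> h1 h2 h3; field; rewrite h1 h2 h3. Qed.

Lemma case5 mu1 mu2 L1 L2 : (mu1%:E < L1)%E -> (mu2%:E < L2)%E -> 0 <= mu1 ->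
  D5 mu1 mu2 L1 L2 ->
  0 <= @sigma5 R /\ 0 <= sigma5p mu1 L2 /\
  cert mu1 mu2 (pc mu1 L1) (pc mu2 L2) (@sigma5 R) (sigma5p mu1 L2).
Proof.
move=> h1 h2 m0 [a b c e hB].
case: L2 h2 b c hB => [l2| |] //= h2 b c hB; rewrite ?lte_fin ?lee_fin in h2 b c *.
set sp := (l2 + mu1) / l2 ^+ 2.
have l0 : 0 < l2 by lra.
have l0' : l2 != 0 by rewrite lt0r_neq0.
have sl : sp * l2 ^+ 2 = l2 + mu1 by rewrite /sp; field.
have sl1 : sp * l2 = 1 + mu1 / l2 by rewrite /sp; field.
have mdl : 0 <= mu1 / l2 by rewrite divr_ge0 //; lra.
have s0 : 0 <= sp by apply: divr_ge0; [lra | apply: sqr_ge0].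
have key : 0 <= mu2 * l2 + mu1 * l2 + mu1 * mu2.
  case: hB => [m2|[m2 hB]].
    by have := mulr_ge0 m2 (ltW l0); have := mulr_ge0 m0 (ltW l0); have := mulr_ge0 m0 m2; lra.
  move: hB; rewrite /Bc eqe (gt_eqF l0) lee_fin /= => hB.
  have m1 : 0 < mu1 by lra.
  have n1 : mu1 != 0 by rewrite lt0r_neq0.
  have n2 : mu2 != 0 by rewrite ltr0_neq0.
  rewrite -Bprod //.
  apply: mulr_le0 => //.
  have P : 0 <= mu1 * (- mu2) * l2 by apply: mulr_ge0; [apply: mulr_ge0|]; lra.
  lra.
have spl : sp * (l2 + mu2) - 1 = (mu2 * l2 + mu1 * l2 + mu1 * mu2) / l2 ^+ 2 by rewrite /sp; field.
have spl0 : 0 <= sp * (l2 + mu2) - 1 by rewrite spl; apply: divr_ge0; [exact: key | exact: sqr_ge0].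
split; first by rewrite /sigma5.
split => //.
exists 0, (sp * l2 - 1), 0, ((l2 - mu2) * (sp * (l2 + mu2) - 1)).
rewrite /sigma5; split; [apply: blockA0 | split; [apply: blockB | ]].
- by rewrite mul0r.
- exact: pc_ge0.
- lra.
- lra.
- lra.
- have -> : (l2 - mu2) * (sp * (l2 + mu2) - 1) = sp * l2 ^+ 2 - sp * mu2 ^+ 2 - l2 + mu2 by ring.
  rewrite sl; lra.
Qed.

Lemma Bneg mu1 mu2 : 0 < mu1 -> mu2 < 0 -> 0 < mu1 + mu2 -> mu1^-1 + mu2^-1 < 0.
Proof.
move=> h1 h2 h3.
have E : mu1 * mu2 * (mu1^-1 + mu2^-1) = mu1 + mu2.
  by field; rewrite (lt0r_neq0 h1) (ltr0_neq0 h2).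
rewrite ltNge; apply/negP => hB.
have P : 0 <= mu1 * (- mu2) by apply: mulr_ge0; lra.
have := mulr_ge0 P hB.
have -> : mu1 * - mu2 * (mu1^-1 + mu2^-1) = - (mu1 * mu2 * (mu1^-1 + mu2^-1)) by ring.
rewrite E; lra.
Qed.

Lemma mpos_of mu1 mu2 : 0 < mu1 -> (0 < mu1 + mu2 \/ mu1 = 0 /\ mu2 = 0) -> 0 < mu1 + mu2.
Proof. move=> h [//|[h1 _]]; lra. Qed.

Lemma case4 mu1 mu2 L1 L2 : (mu1%:E < L1)%E -> (mu2%:E < L2)%E -> 0 <= mu1 ->
  (0 < mu1 + mu2 \/ mu1 = 0 /\ mu2 = 0) ->
  D4 mu1 mu2 L1 L2 ->
  0 <= @sigma4 R /\ 0 <= sigma4p mu1 mu2 /\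
  cert mu1 mu2 (pc mu1 L1) (pc mu2 L2) (@sigma4 R) (sigma4p mu1 mu2).
Proof.
move=> h1 h2 m0 mp [m2 m1 e alt].
have mp' := mpos_of _ _ m1 mp.
have n1 : mu1 != 0 by rewrite lt0r_neq0.
have n2 : mu2 != 0 by rewrite ltr0_neq0.
set sp := (mu1 + mu2) / mu2 ^+ 2.
have sp0 : 0 <= sp by apply: divr_ge0; [lra | apply: sqr_ge0].
have spm : sp * mu2 ^+ 2 = mu1 + mu2 by rewrite /sp; field.
have [l2 [L2E key]] : exists l2, L2 = l2%:E /\ sp * (l2 + mu2) <= 1.
  case: L2 h2 alt => [l2| |] //= h2 alt.
  - exists l2; split => //.
    rewrite lte_fin in h2.
    have [l0|l0] := lerP l2 0.
      have : sp * (l2 + mu2) <= 0 by apply: mulr_ge0_le0 => //; lra.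
      lra.
    have l0' : l2 != 0 by rewrite lt0r_neq0.
    have hB : 0 < mu1^-1 + mu2^-1 + l2^-1.
      case: alt => [[hB _]|[hB _]|[_ hL]].
      + by move: hB; rewrite /Bc eqe (negPf l0') lte_fin.
      + by move: hB; rewrite /Bc eqe (negPf l0') lte_fin.
      + by move: hL; rewrite lee_fin; lra.
    have P : 0 <= mu1 * (- mu2) * l2 by apply: mulr_ge0; [apply: mulr_ge0|]; lra.
    have := mulr_ge0 P (ltW hB).
    have -> : mu1 * - mu2 * l2 * (mu1^-1 + mu2^-1 + l2^-1) = - (mu1 * mu2 * l2 * (mu1^-1 + mu2^-1 + l2^-1)) by ring.
    rewrite Bprod // => Q.
    have -> : sp * (l2 + mu2) = (mu1 + mu2) * (l2 + mu2) / mu2 ^+ 2 by rewrite /sp; field.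
    have q2 : 0 < mu2 ^+ 2 by rewrite exprn_even_gt0 // n2 orbT.
    rewrite ler_pdivrMr // mul1r; lra.
  - exfalso.
    have := Bneg _ _ m1 m2 mp'.
    case: alt => [[hB _]|[hB _]|[_ hL]] //.
    + by move: hB; rewrite /Bc /= addr0 lte_fin; lra.
    + by move: hB; rewrite /Bc /= addr0 lte_fin; lra.
move: h2; rewrite L2E lte_fin => h2.
rewrite /sigma4p -/sp.
split; first by rewrite /sigma4.
split => //.
exists 0, (- (sp * mu2)), 0, 0.
rewrite /sigma4; split; [apply: blockA0 | split; [apply: blockC | ]].
- by rewrite mul0r.
- exact: pc_ge0.
- lra.
- exact: sp0.
- rewrite /= ler_pdivlMr; lra.
- lra.
Qed.
Lemma side3_fin (mu1 l1 B : R) : 0 < mu1 -> mu1 < l1 -> B <= 0 ->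
  0 <= l1^-1 * B / (B - l1^-1) /\ l1^-1 * B / (B - l1^-1) < (l1 - mu1)^-1 /\
  (l1^-1 * B / (B - l1^-1) * mu1) ^+ 2 / ((l1 - mu1)^-1 - l1^-1 * B / (B - l1^-1))
    + l1^-1 * B / (B - l1^-1) * mu1 ^+ 2 = B * mu1 ^+ 2 / (B * mu1 - 1).
Proof.
move=> m1 ml hB.
have l0 : 0 < l1 by lra.
have n1 : l1 != 0 by rewrite lt0r_neq0.
have nlm : l1 - mu1 != 0 by rewrite lt0r_neq0 // subr_gt0.
have Bm : B * mu1 - 1 < 0 by have := mulr_le0_ge0 hB (ltW m1); lra.
have Bl : B * l1 - 1 < 0 by have := mulr_le0_ge0 hB (ltW l0); lra.
have nBm : B * mu1 - 1 != 0 by rewrite ltr0_neq0.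
have nBl : B * l1 - 1 != 0 by rewrite ltr0_neq0.
have li0 : 0 < l1^-1 by rewrite invr_gt0.
have nY : B - l1^-1 != 0 by rewrite ltr0_neq0 //; lra.
have C1 : l1^-1 * B / (B - l1^-1) = (- B) / (1 - B * l1).
  by field; rewrite nBl n1 andbT; rewrite lt0r_neq0 //; lra.
have nBl' : 1 - B * l1 != 0 by rewrite lt0r_neq0 //; lra.
have nBm' : 1 - B * mu1 != 0 by rewrite lt0r_neq0 //; lra.
have C2 : (l1 - mu1)^-1 - (- B) / (1 - B * l1) = (1 - B * mu1) / ((l1 - mu1) * (1 - B * l1)).
  by field; rewrite nBl' nlm.
have C3 : ((- B) / (1 - B * l1) * mu1) ^+ 2 / ((1 - B * mu1) / ((l1 - mu1) * (1 - B * l1)))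
    + (- B) / (1 - B * l1) * mu1 ^+ 2 = B * mu1 ^+ 2 / (B * mu1 - 1).
  by field; rewrite nBl' nlm nBm nBm'.
rewrite C1; split; last split.
- apply: divr_ge0; lra.
- rewrite -subr_gt0 C2; apply: divr_gt0; first lra.
  apply: mulr_gt0; lra.
- by rewrite -C2 in C3.
Qed.

Lemma negdiv_ge0 (B X : R) : B <= 0 -> X < 0 -> 0 <= B / X.
Proof.
move=> hB hX.
have -> : B / X = (- B) / (- X) by rewrite invrN mulrNN.
apply: divr_ge0; lra.
Qed.

Lemma case3 mu1 mu2 L1 L2 : (mu1%:E < L1)%E -> (mu2%:E < L2)%E -> 0 <= mu1 ->
  (0 < mu1 + mu2 \/ mu1 = 0 /\ mu2 = 0) ->
  D3 mu1 mu2 L1 L2 ->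
  0 <= sigma3 mu1 mu2 L1 L2 /\ 0 <= sigma3p mu2 L2 /\
  cert mu1 mu2 (pc mu1 L1) (pc mu2 L2) (sigma3 mu1 mu2 L1 L2) (sigma3p mu2 L2).
Proof.
move=> h1 h2 m0 mp [m2 m1 c2 e [hB _]].
have mp' := mpos_of _ _ m1 mp.
have n1 : mu1 != 0 by rewrite lt0r_neq0.
have n2 : mu2 != 0 by rewrite ltr0_neq0.
have q2 : 0 < mu2 ^+ 2 by rewrite exprn_even_gt0 // n2 orbT.
rewrite /sigma3 /sigma3p /=.
have [B [sp [BE [spE [B0 [side2 [sp0 TE]]]]]]] : exists B sp,
    mu1^-1 + mu2^-1 + einv L2 = B /\ einv (L2 + mu2%:E)%E = sp /\ B <= 0 /\
    side mu2 (pc mu2 L2) sp (- (sp * mu2)) 0 /\ 0 <= sp /\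
    mu1 + mu2 - sp * mu2 ^+ 2 = B * mu1 ^+ 2 / (B * mu1 - 1).
  case: L2 h2 c2 hB => [l2| |] //= h2 c2 hB; rewrite ?lte_fin in h2 c2.
  - have l0 : 0 < l2 by lra.
    have nl : l2 != 0 by rewrite lt0r_neq0.
    move: hB; rewrite /Bc eqe (negPf nl) lee_fin /= => hB.
    have key0 : 0 <= mu2 * l2 + mu1 * l2 + mu1 * mu2.
      rewrite -Bprod //; apply: mulr_le0 => //.
      have P : 0 <= mu1 * (- mu2) * l2 by apply: mulr_ge0; [apply: mulr_ge0|]; lra.
      lra.
    have lpos : 0 < l2 + mu2.
      rewrite ltNge; apply/negP => h.
      have := mulr_le0_ge0 h (ltW mp'); lra.
    have nlp : l2 + mu2 != 0 by rewrite lt0r_neq0.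
    have nlm : l2 - mu2 != 0 by rewrite lt0r_neq0 //; lra.
    have X : (mu1^-1 + mu2^-1 + l2^-1) * mu1 - 1 = mu1 * (l2 + mu2) / (mu2 * l2).
      by field; rewrite nl n2.
    have Xn : (mu1^-1 + mu2^-1 + l2^-1) * mu1 - 1 != 0.
      rewrite X mulf_neq0 // ?invr_eq0 ?mulf_neq0 //.
    exists (mu1^-1 + mu2^-1 + l2^-1), (l2 + mu2)^-1.
    split => //; split => //; split => //; split; last split.
    + apply: blockC; [lra | rewrite invr_ge0; lra |].
      have -> : (1 - 2 * ((l2 + mu2)^-1 * mu2)) * (l2 - mu2)^-1 = (l2 + mu2)^-1.
        by field; rewrite nlp nlm.
      by [].
    + rewrite invr_ge0; lra.
    + apply: (canRL (mulfK Xn)).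
      by field; rewrite nlp nl n2 n1.
  - move: hB; rewrite /Bc /= addr0 lee_fin => hB.
    have Xn : (mu1^-1 + mu2^-1) * mu1 - 1 != 0.
      have -> : (mu1^-1 + mu2^-1) * mu1 - 1 = mu1 / mu2 by field; rewrite n1 n2.
      by rewrite mulf_neq0 // invr_eq0.
    exists (mu1^-1 + mu2^-1), 0.
    split => //; split => //; split => //; split; last split.
    + by apply: blockC; rewrite ?mulr0 //; lra.
    + by [].
    + apply: (canRL (mulfK Xn)).
      by field; rewrite n2 n1.
rewrite BE spE.
have T0 : 0 <= B * mu1 ^+ 2 / (B * mu1 - 1).
  apply: negdiv_ge0; first by apply: mulr_le0_ge0 => //; apply: sqr_ge0.
  have := mulr_le0_ge0 B0 (ltW m1); lra.
case: L1 h1 e => [l1| |] //= h1 e; rewrite ?lte_fin in h1 e.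
- have [s0 [sp1 k]] := side3_fin _ _ _ m1 h1 B0.
  split => //; split => //.
  exists 0, (- (sp * mu2)), ((l1^-1 * B / (B - l1^-1) * mu1) ^+ 2 / ((l1 - mu1)^-1 - l1^-1 * B / (B - l1^-1))), 0.
  split; [apply: blockA => // | split => //].
  lra.
- rewrite !mul0r; split => //; split => //.
  exists 0, (- (sp * mu2)), 0, 0.
  split; [apply: blockA0 => //; rewrite ?mul0r // | split => //].
  lra.
Qed.

Lemma assemble2 mu1 mu2 l1 p2 s sp kap k2 : mu1 < l1 -> 0 <= mu1 -> 0 <= s -> 1 <= s * l1 ->
  side mu2 p2 sp kap k2 -> s * l1 ^+ 2 - l1 + k2 + sp * mu2 ^+ 2 <= mu2 ->
  cert mu1 mu2 ((l1 - mu1)^-1) p2 s sp.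
Proof.
move=> h1 h2 h3 h4 s2 tot.
exists (s * l1 - 1), kap, ((l1 - mu1) * (s * (l1 + mu1) - 1)), k2.
split; [apply: blockB => // | split => //].
- have := mulr_ge0 h3 h2; lra.
- lra.
Qed.

Lemma assemble1 mu1 mu2 l2 p1 s sp lam k1 : mu2 < l2 -> 1 <= sp * l2 -> 1 <= sp * (l2 + mu2) ->
  side mu1 p1 s lam k1 -> k1 + s * mu1 ^+ 2 + sp * l2 ^+ 2 - l2 <= mu1 ->
  cert mu1 mu2 p1 ((l2 - mu2)^-1) s sp.
Proof.
move=> h1 h2 h3 s1 tot.
exists lam, (sp * l2 - 1), k1, ((l2 - mu2) * (sp * (l2 + mu2) - 1)).
split => //; split; [apply: blockB => // | ].
lra.
Qed.

Lemma case2 mu1 mu2 L1 L2 : (mu1%:E < L1)%E -> (mu2%:E < L2)%E -> 0 <= mu1 ->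
  (L1 < +oo \/ L2 < +oo)%E ->
  D2 mu1 mu2 L1 L2 ->
  0 <= sigma2 mu2 L1 L2 /\ 0 <= sigma2p mu2 L1 L2 /\
  cert mu1 mu2 (pc mu1 L1) (pc mu2 L2) (sigma2 mu2 L1 L2) (sigma2p mu2 L1 L2).
Proof.
move=> h1 h2 m0 sm [b c mu2p d _].
case: L1 h1 b c sm => [l1| |] //= h1 b c sm; rewrite ?lte_fin ?lee_fin in h1 c; last first.
  exfalso; move: b; rewrite leye_eq => /eqP L2E.
  by move: sm; rewrite L2E ltxx; case.
clear sm.
have l0 : 0 < l1 by lra.
have nl1 : l1 != 0 by rewrite lt0r_neq0.
rewrite /sigma2.
have [m20|m2p] := eqVneq mu2 0.
-
  subst mu2.
  have sl : l1^-1 * l1 = 1 by rewrite mulVf.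
  case: L2 h2 b d => [l2| |] //= h2 b d; rewrite ?lte_fin ?lee_fin in h2 b d.
  + have nl2 : l2 != 0 by rewrite lt0r_neq0.
    have spE : l1^-1 * ((l1 - 0) / (l2 - 0)) = (l2 - 0)^-1 by fld.
    rewrite spE; split; first by rewrite invr_ge0; lra.
    split; first by rewrite invr_ge0; lra.
    apply: (@assemble2 _ _ _ _ _ _ 0 0) => //; first by rewrite invr_ge0; lra.
    * by rewrite sl.
    * by apply: blockA0; rewrite ?mulr0.
    * have -> : l1^-1 * l1 ^+ 2 = l1 by fld.
      lra.
  + split; first by rewrite invr_ge0; lra.
    split => //.
    apply: (@assemble2 _ _ _ _ _ _ 0 0) => //; first by rewrite invr_ge0; lra.
    * by rewrite sl.
    * by apply: blockA0; rewrite ?mulr0.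
    * have -> : l1^-1 * l1 ^+ 2 = l1 by fld.
      lra.
- have m2 : 0 < mu2 by rewrite lt_def m2p.
  case: L2 h2 b d => [l2| |] //= h2 b d; rewrite ?lte_fin ?lee_fin in h2 b d.
  + have nl2 : l2 != 0 by rewrite lt0r_neq0; lra.
    have nlm : l2 - mu2 != 0 by rewrite lt0r_neq0 //; lra.
    have Es : l1^-1 * (1 + (l1^-1 - l2^-1) / (mu2^-1 - l2^-1)) = l1^-1 + mu2 * (l2 - l1) / (l1 ^+ 2 * (l2 - mu2)).
      by fld.
    rewrite Es.
    set s := l1^-1 + _.
    set sp := l1^-1 * ((l1 - mu2) / (l2 - mu2)).
    have lm2 : 0 < l2 - mu2 by lra.
    have sl : s * l1 - 1 = mu2 * (l2 - l1) / (l1 * (l2 - mu2)) by rewrite /s; fld.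
    have sl0 : 0 <= s * l1 - 1.
      rewrite sl; apply: divr_ge0; first by apply: mulr_ge0; lra.
      by apply: mulr_ge0; lra.
    have s0 : 0 <= s.
      rewrite /s; apply: addr_ge0; first by rewrite invr_ge0; lra.
      apply: divr_ge0; first by apply: mulr_ge0; lra.
      by apply: mulr_ge0; [apply: sqr_ge0 | lra].
    have sp0 : 0 <= sp.
      rewrite /sp; apply: mulr_ge0; first by rewrite invr_ge0; lra.
      by apply: divr_ge0; lra.
    have psp : (l2 - mu2)^-1 - sp = mu2 / (l1 * (l2 - mu2)) by rewrite /sp; fld.
    have psp0 : 0 < (l2 - mu2)^-1 - sp by rewrite psp; apply: divr_gt0 => //; apply: mulr_gt0.
    have npsp : mu2 / (l1 * (l2 - mu2)) != 0 by rewrite -psp lt0r_neq0.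
    have K2 : (sp * mu2) ^+ 2 / ((l2 - mu2)^-1 - sp) = sp * mu2 * (l1 - mu2).
      by rewrite psp /sp; fld.
    have T : s * l1 ^+ 2 - l1 + sp * mu2 * l1 = mu2 by rewrite /s /sp; fld.
    split => //; split => //.
    apply: (@assemble2 _ _ _ _ _ _ 0 ((sp * mu2) ^+ 2 / ((l2 - mu2)^-1 - sp))) => //.
    * lra.
    * by apply: blockA => //; lra.
    * rewrite K2; lra.
  + rewrite !subr0.
    have Es : l1^-1 * (1 + l1^-1 / mu2^-1) = l1^-1 + mu2 / l1 ^+ 2 by fld.
    rewrite Es.
    set s := l1^-1 + _.
    have T : s * l1 ^+ 2 - l1 = mu2 by rewrite /s; fld.
    have sl : s * l1 - 1 = mu2 / l1 by rewrite /s; fld.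
    have sl0 : 0 <= s * l1 - 1 by rewrite sl; apply: divr_ge0; lra.
    have s0 : 0 <= s.
      rewrite /s; apply: addr_ge0; first by rewrite invr_ge0; lra.
      by apply: divr_ge0; [lra | apply: sqr_ge0].
    split => //; split => //.
    apply: (@assemble2 _ _ _ _ _ _ 0 0) => //.
    * lra.
    * by apply: blockA0; rewrite ?mul0r.
    * lra.
Qed.

Lemma case1 mu1 mu2 L1 L2 : (mu1%:E < L1)%E -> (mu2%:E < L2)%E -> 0 <= mu1 ->
  (L1 < +oo \/ L2 < +oo)%E ->
  D1 mu1 mu2 L1 L2 ->
  0 <= sigma1 mu1 L1 L2 /\ 0 <= sigma1p mu1 L1 L2 /\
  cert mu1 mu2 (pc mu1 L1) (pc mu2 L2) (sigma1 mu1 L1 L2) (sigma1p mu1 L1 L2).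
Proof.
move=> h1 h2 m0 sm [b c _ e alt].
case: L2 h2 b c alt sm => [l2| |] //= h2 b c alt sm; rewrite ?lte_fin ?lee_fin in h2 c; last first.
  exfalso; move: b; rewrite leye_eq => /eqP L1E.
  by move: sm; rewrite L1E ltxx; case.
clear sm.
rewrite /sigma1p.
have [m10|m1n] := eqVneq mu1 0.
- subst mu1.
  have mu2p : 0 <= mu2.
    case: alt => [//|[_]]; by rewrite /Ec eqxx.
  have l0 : 0 < l2 by lra.
  have nl2 : l2 != 0 by rewrite lt0r_neq0.
  have T : l2^-1 * l2 ^+ 2 - l2 = 0 by fld; lra.
  have spl : l2^-1 * l2 = 1 by rewrite mulVf.
  have spm : 0 <= l2^-1 * mu2 by apply: mulr_ge0 => //; rewrite invr_ge0; lra.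
  case: L1 h1 e b alt => [l1| |] //= h1 e b alt; rewrite ?lte_fin in h1 e.
  + have nl1 : l1 != 0 by rewrite lt0r_neq0.
    have sE : l2^-1 * ((l2 - 0) / (l1 - 0)) = (l1 - 0)^-1 by fld.
    rewrite sE; split; first by rewrite invr_ge0; lra.
    split; first by rewrite invr_ge0; lra.
    apply: (@assemble1 _ _ _ _ _ _ 0 0) => //.
    * by rewrite spl.
    * by rewrite mulrDr spl; lra.
    * by apply: blockA0; rewrite ?mulr0.
    * lra.
  + split => //; split; first by rewrite invr_ge0; lra.
    apply: (@assemble1 _ _ _ _ _ _ 0 0) => //.
    * by rewrite spl.
    * by rewrite mulrDr spl; lra.
    * by apply: blockA0; rewrite ?mulr0.
    * lra.
- have m1 : 0 < mu1 by rewrite lt_def m1n.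
  have l0 : 0 < l2 by lra.
  have nl2 : l2 != 0 by rewrite lt0r_neq0.
  case: L1 h1 e b alt => [l1| |] //= h1 e b alt; rewrite ?lte_fin ?lee_fin in h1 e b.
  + have nl1 : l1 != 0 by rewrite lt0r_neq0; lra.
    have nlm : l1 - mu1 != 0 by rewrite lt0r_neq0 //; lra.
    have lm : 0 < l1 - mu1 by lra.
    have Esp : l2^-1 * (1 + (l2^-1 - l1^-1) / (mu1^-1 - l1^-1)) = l2^-1 + mu1 * (l1 - l2) / (l2 ^+ 2 * (l1 - mu1)).
      by fld.
    rewrite Esp.
    set sp := l2^-1 + _.
    set s := l2^-1 * ((l2 - mu1) / (l1 - mu1)).
    have spl : sp * l2 - 1 = mu1 * (l1 - l2) / (l2 * (l1 - mu1)) by rewrite /sp; fld.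
    have spl0 : 0 <= sp * l2 - 1.
      rewrite spl; apply: divr_ge0; first by apply: mulr_ge0; lra.
      by apply: mulr_ge0; lra.
    have sp0 : 0 <= sp.
      rewrite /sp; apply: addr_ge0; first by rewrite invr_ge0; lra.
      apply: divr_ge0; first by apply: mulr_ge0; lra.
      by apply: mulr_ge0; [apply: sqr_ge0 | lra].
    have s0 : 0 <= s.
      rewrite /s; apply: mulr_ge0; first by rewrite invr_ge0; lra.
      by apply: divr_ge0; lra.
    have ps : (l1 - mu1)^-1 - s = mu1 / (l2 * (l1 - mu1)) by rewrite /s; fld.
    have ps0 : 0 < (l1 - mu1)^-1 - s by rewrite ps; apply: divr_gt0 => //; apply: mulr_gt0.
    have nps : mu1 / (l2 * (l1 - mu1)) != 0 by rewrite -ps lt0r_neq0.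
    have K1 : (s * mu1) ^+ 2 / ((l1 - mu1)^-1 - s) = s * mu1 * (l2 - mu1).
      by rewrite ps /s; fld.
    have T : s * mu1 * l2 + sp * l2 ^+ 2 - l2 = mu1 by rewrite /s /sp; fld.
    have spm : 1 <= sp * (l2 + mu2).
      case: alt => [m2|[m2 hE]].
        have := mulr_ge0 sp0 m2; lra.
      move: hE; rewrite /Ec (negPf m1n) lee_fin => hE.
      have nm2 : mu2 != 0 by rewrite ltr0_neq0.
      have Id : sp * (l2 + mu2) - 1 = ((l2 + mu2) / (l1 * l2) * ((l2 - l1) / - mu2) + mu1^-1 - l1^-1)
          * (mu1 * l1 * mu2 / (l2 * (l1 - mu1))).
        by rewrite /sp; fld; rewrite oppr_eq0.
      have F : mu1 * l1 * mu2 / (l2 * (l1 - mu1)) <= 0.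
        have -> : mu1 * l1 * mu2 / (l2 * (l1 - mu1)) = - (mu1 * l1 * (- mu2) / (l2 * (l1 - mu1))) by ring.
        rewrite oppr_le0; apply: divr_ge0; last by apply: mulr_ge0; lra.
        by apply: mulr_ge0; [apply: mulr_ge0|]; lra.
      have := mulr_le0 hE F; lra.
    split => //; split => //.
    apply: (@assemble1 _ _ _ _ _ _ 0 ((s * mu1) ^+ 2 / ((l1 - mu1)^-1 - s))) => //.
    * lra.
    * by apply: blockA => //; lra.
    * rewrite K1; lra.
  + rewrite !subr0.
    have Esp : l2^-1 * (1 + l2^-1 / mu1^-1) = l2^-1 + mu1 / l2 ^+ 2 by fld.
    rewrite Esp.
    set sp := l2^-1 + _.
    have spl : sp * l2 - 1 = mu1 / l2 by rewrite /sp; fld.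
    have spl0 : 0 <= sp * l2 - 1 by rewrite spl; apply: divr_ge0; lra.
    have sp0 : 0 <= sp.
      rewrite /sp; apply: addr_ge0; first by rewrite invr_ge0; lra.
      by apply: divr_ge0; [lra | apply: sqr_ge0].
    have T : sp * l2 ^+ 2 - l2 = mu1 by rewrite /sp; fld.
    have spm : 1 <= sp * (l2 + mu2).
      case: alt => [m2|[m2 hE]].
        have := mulr_ge0 sp0 m2; lra.
      move: hE; rewrite /Ec (negPf m1n) lee_fin => hE.
      have nm2 : mu2 != 0 by rewrite ltr0_neq0.
      have Id : sp * (l2 + mu2) - 1 = ((l2 + mu2) / (l2 * mu2) + mu1^-1) * (mu1 * mu2 / l2).
        by rewrite /sp; fld.
      have F : mu1 * mu2 / l2 <= 0.
        have -> : mu1 * mu2 / l2 = - (mu1 * (- mu2) / l2) by ring.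
        rewrite oppr_le0; apply: divr_ge0; last by lra.
        by apply: mulr_ge0; lra.
      have := mulr_le0 hE F; lra.
    split => //; split => //.
    apply: (@assemble1 _ _ _ _ _ _ 0 0) => //.
    * lra.
    * by apply: blockA0; rewrite ?mul0r.
    * lra.
Qed.

End Scalar.
Arguments pc {R}.
Arguments side {R}.
Arguments cert {R}.


Section Aux.
Variables (R : realType) (d : nat).
Notation V := 'rV[R]_d.
Implicit Types (u v w : V) (a b c : R).

Ltac dotid := rewrite /sqnorm /dotv ?mulr_sumr -?sumrN -?big_split /=;
  apply eq_bigr => i _; rewrite !mxE; ring.

Lemma sqnorm_ge0 u : 0 <= sqnorm u.
Proof. by rewrite /sqnorm /dotv; apply: sumr_ge0 => i _; rewrite -expr2 sqr_ge0. Qed.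

Lemma le_lim (X Y c : R) : (forall t, 0 < t -> t < 1 -> X <= Y + c * t) -> X <= Y.
Proof.
move=> H; apply/ler_addgt0Pr => e e0.
have [c0|c0] := lerP c 0.
  have h1 : (0:R) < 2^-1 by lra.
  have h2 : (2^-1:R) < 1 by lra.
  have := H _ h1 h2. have : c * 2^-1 <= 0 by rewrite pmulr_lle0.
  lra.
have ec : 0 < e + c by lra.
have t0 : 0 < e / (e + c) by rewrite divr_gt0.
have t1 : e / (e + c) < 1 by rewrite ltr_pdivrMr // mul1r; lra.
have := H _ t0 t1.
have : c * (e / (e + c)) <= e.
  rewrite mulrA ler_pdivrMr //; nra.
lra.
Qed.

Lemma descent (K : R) (h : V -> R) (y H : V) :
  convexf (fun w => K / 2 * sqnorm w - h w) ->
  (forall z, h y + dotv H (z - y) <= h z) ->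
  forall z, h z <= h y + dotv H (z - y) + K / 2 * sqnorm (z - y).
Proof.
rewrite /convexf => cvx sub z; set v := z - y.
have zE : z = y + v by rewrite /v addrC subrK.
apply: (@le_lim _ _ (K / 2 * sqnorm v)) => s s0 s1.
have s1' : 1 + s != 0 by rewrite lt0r_neq0 //; lra.
have ht : 0 <= (1 + s)^-1 <= 1.
  apply/andP; split; first by rewrite invr_ge0; lra.
  by rewrite invf_le1; lra.
have := cvx (y - s *: v) z ((1 + s)^-1) ht.
have -> : (1 + s)^-1 *: (y - s *: v) + (1 - (1 + s)^-1) *: z = y.
  by rewrite zE; apply/rowP => i; rewrite !mxE; field.
have E1 : sqnorm (y - s *: v) = sqnorm y - 2 * s * dotv y v + s ^+ 2 * sqnorm v by dotid.
have E2 : sqnorm z = sqnorm y + 2 * dotv y v + sqnorm v by rewrite zE; dotid.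
have E3 : dotv H (y - s *: v - y) = - (s * dotv H v) by dotid.
have hs := sub (y - s *: v); rewrite E3 in hs.
rewrite E1 E2 => key.
have s1p : 0 <= 1 + s by lra.
have key' := ler_wpM2l s1p key.
have EE : forall A B : R, (1 + s) * ((1 + s)^-1 * A + (1 - (1 + s)^-1) * B) = A + s * B.
  by move=> A B; field.
rewrite EE in key'.
rewrite -subr_ge0 -(pmulr_rge0 _ s0).
lra.
Qed.

Lemma coco (K : R) (h : V -> R) (x y G H : V) : 0 < K ->
  (forall z, h x + dotv G (z - x) <= h z) ->
  (forall z, h z <= h y + dotv H (z - y) + K / 2 * sqnorm (z - y)) ->
  h x + dotv G (y - x) + K^-1 / 2 * sqnorm (H - G) <= h y.
Proof.
move=> K0 sx dy.
have K0' : K != 0 by rewrite lt0r_neq0.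
set z := y - K^-1 *: (H - G).
have a := sx z; have b := dy z.
have E1 : dotv G (z - x) = dotv G (y - x) - K^-1 * dotv G (H - G) by rewrite /z; dotid.
have E2 : dotv H (z - y) = - (K^-1 * dotv H (H - G)) by rewrite /z; dotid.
have E3 : K / 2 * sqnorm (z - y) = K^-1 / 2 * sqnorm (H - G).
  rewrite /z /sqnorm /dotv !mulr_sumr; apply eq_bigr => j _; rewrite !mxE; field; done.
have E4 : K^-1 * sqnorm (H - G) = K^-1 * dotv H (H - G) - K^-1 * dotv G (H - G) by dotid.
rewrite E1 in a; rewrite E2 E3 in b.
lra.
Qed.


Lemma interp (mu : R) (L : \bar R) (f : V -> R) (x y g h : V) :
  inF mu L f -> subdiff mu f x g -> subdiff mu f y h ->
  f x + dotv g (y - x) + mu / 2 * sqnorm (y - x)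
    + pc mu L / 2 * sqnorm (h - g - mu *: (y - x)) <= f y.
Proof.
case=> _ cvx ltL cvxL sx sy.
set hh := fun w => f w - mu / 2 * sqnorm w.
have key : hh x + dotv (g - mu *: x) (y - x)
   + pc mu L / 2 * sqnorm ((h - mu *: y) - (g - mu *: x)) <= hh y.
  move: ltL cvxL; case: L => [r| |] //= ltL cvxL.
  - have K0 : 0 < r - mu by rewrite subr_gt0 -lte_fin.
    apply: coco => //.
    apply: descent => //.
    move: (cvxL r erefl); rewrite /convexf => c a b t ht.
    have EE : forall w, (r - mu) / 2 * sqnorm w - hh w = r / 2 * sqnorm w - f w.
      by move=> w; rewrite /hh; field.
    rewrite !EE; exact: c.
  - have := sx y; rewrite /hh; lra.
have E1 : sqnorm y = sqnorm x + 2 * dotv x (y - x) + sqnorm (y - x) by dotid.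
have E2 : dotv (g - mu *: x) (y - x) = dotv g (y - x) - mu * dotv x (y - x) by dotid.
have E3 : (h - mu *: y) - (g - mu *: x) = h - g - mu *: (y - x).
  by apply/rowP => i; rewrite !mxE; ring.
move: key; rewrite /hh E1 E2 E3; lra.
Qed.

Lemma argmin_sub (mu : R) (L : \bar R) (f : V -> R) (xp g : V) :
  inF mu L f -> (forall w, f xp - dotv g xp <= f w - dotv g w) -> subdiff mu f xp g.
Proof.
case=> _ cvx _ _ am y; set w := y - xp.
have yE : y = xp + w by rewrite /w addrC subrK.
apply: (@le_lim _ _ (mu / 2 * sqnorm w)) => t t0 t1.
have ht : 0 <= t <= 1 by apply/andP; split; lra.
have := cvx y xp t ht.
have := am (t *: y + (1 - t) *: xp).
have -> : t *: y + (1 - t) *: xp = xp + t *: w.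
  by rewrite yE; apply/rowP => i; rewrite !mxE; ring.
have E1 : sqnorm (xp + t *: w) = sqnorm xp + 2 * t * dotv xp w + t ^+ 2 * sqnorm w by dotid.
have E2 : dotv g (xp + t *: w) = dotv g xp + t * dotv g w by dotid.
have E3 : sqnorm y = sqnorm xp + 2 * dotv xp w + sqnorm w by rewrite yE; dotid.
have E4 : dotv (g - mu *: xp) (y - xp) = dotv g w - mu * dotv xp w by rewrite -/w; dotid.
rewrite E1 E2 E3 E4 => a c.
rewrite -subr_ge0 -(pmulr_rge0 _ t0).
lra.
Qed.

Lemma psd_piece (A x k : R) (U D : V) : 0 <= A -> 0 <= k -> x ^+ 2 <= k * A ->
  0 <= A * sqnorm U - 2 * x * dotv U D + k * sqnorm D.
Proof.
move=> A0 k0 hk.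
have SD := sqnorm_ge0 D.
have [A00|Apos] := eqVneq A 0.
  have x0 : x = 0.
    by apply/eqP; rewrite -sqrf_eq0 eq_le sqr_ge0 andbT; move: hk; rewrite A00 mulr0.
  rewrite A00 x0; have := mulr_ge0 k0 SD; lra.
have Ap : 0 < A by rewrite lt_def Apos.
rewrite -(pmulr_rge0 _ Ap).
have S := sqnorm_ge0 (A *: U - x *: D).
have E : sqnorm (A *: U - x *: D) = A ^+ 2 * sqnorm U - 2 * A * x * dotv U D + x ^+ 2 * sqnorm D by dotid.
have := mulr_ge0 (_ : 0 <= k * A - x ^+ 2) SD.
rewrite E in S; move: hk; nra.
Qed.

Lemma combine (mu1 mu2 p1 p2 s sp lam kap k1 k2 : R) (f1 f2 : V -> R) (x xp g1 g2 g2p : V) :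
  0 <= lam -> 0 <= kap -> 0 <= k1 -> 0 <= k2 ->
  0 <= (1 + 2 * lam) * p1 - s -> 0 <= (1 + 2 * kap) * p2 - sp ->
  (lam + s * mu1) ^+ 2 <= k1 * ((1 + 2 * lam) * p1 - s) ->
  (kap + sp * mu2) ^+ 2 <= k2 * ((1 + 2 * kap) * p2 - sp) ->
  k1 + k2 <= mu1 + mu2 - s * mu1 ^+ 2 - sp * mu2 ^+ 2 ->
  f1 xp + dotv g2 (x - xp) + mu1 / 2 * sqnorm (x - xp)
    + p1 / 2 * sqnorm (g1 - g2 - mu1 *: (x - xp)) <= f1 x ->
  f1 x + dotv g1 (xp - x) + mu1 / 2 * sqnorm (xp - x)
    + p1 / 2 * sqnorm (g2 - g1 - mu1 *: (xp - x)) <= f1 xp ->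
  f2 x + dotv g2 (xp - x) + mu2 / 2 * sqnorm (xp - x)
    + p2 / 2 * sqnorm (g2p - g2 - mu2 *: (xp - x)) <= f2 xp ->
  f2 xp + dotv g2p (x - xp) + mu2 / 2 * sqnorm (x - xp)
    + p2 / 2 * sqnorm (g2 - g2p - mu2 *: (x - xp)) <= f2 x ->
  s * 2^-1 * sqnorm (g1 - g2) + sp * 2^-1 * sqnorm (g2 - g2p)
    <= (f1 x - f2 x) - (f1 xp - f2 xp).
Proof.
move=> l0 k0 k10 k20 A0 B0 hA hB hk fA fB fC fD.
have e1 : sqnorm (xp - x) = sqnorm (x - xp) by dotid.
have e2 : sqnorm (g2 - g1 - mu1 *: (xp - x)) = sqnorm (g1 - g2 - mu1 *: (x - xp)) by dotid.
have e3 : sqnorm (g2p - g2 - mu2 *: (xp - x)) = sqnorm (g2p - g2 + mu2 *: (x - xp)) by dotid.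
have e4 : sqnorm (g2 - g2p - mu2 *: (x - xp)) = sqnorm (g2p - g2 + mu2 *: (x - xp)) by dotid.
have e5 : dotv g1 (xp - x) = - dotv g1 (x - xp) by dotid.
have e6 : dotv g2 (xp - x) = - dotv g2 (x - xp) by dotid.
rewrite e1 e2 e5 in fB; rewrite e1 e3 e6 in fC; rewrite e4 in fD.
set D := x - xp in fA fB fC fD *.
set U := g1 - g2 - mu1 *: D in fA fB *.
set W := g2p - g2 + mu2 *: D in fC fD *.
have e7 : dotv U D = dotv g1 D - dotv g2 D - mu1 * sqnorm D by rewrite /U; dotid.
have e8 : dotv W D = dotv g2p D - dotv g2 D + mu2 * sqnorm D by rewrite /W; dotid.
have e9 : sqnorm (g1 - g2) = sqnorm U + 2 * mu1 * dotv U D + mu1 ^+ 2 * sqnorm D by rewrite /U; dotid.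
have e10 : sqnorm (g2 - g2p) = sqnorm W - 2 * mu2 * dotv W D + mu2 ^+ 2 * sqnorm D by rewrite /W; dotid.
have P1 := psd_piece _ _ _ U D A0 k10 hA.
have P2 := psd_piece _ (- (kap + sp * mu2)) _ W D B0 k20.
rewrite sqrrN in P2; have {P2} P2 := P2 hB.
have P3 := mulr_ge0 (_ : 0 <= mu1 + mu2 - s * mu1 ^+ 2 - sp * mu2 ^+ 2 - k1 - k2) (sqnorm_ge0 D).
have {P3} P3 := P3 (ltac:(lra)).
rewrite e7 in P1; rewrite e8 in P2.
have fA' := ler_wpM2l (_ : 0 <= 1 + lam) fA; have {fA'} fA' := fA' ltac:(lra).
have fB' := ler_wpM2l l0 fB.
have fC' := ler_wpM2l (_ : 0 <= 1 + kap) fC; have {fC'} fC' := fC' ltac:(lra).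
have fD' := ler_wpM2l k0 fD.
rewrite e9 e10 e7 e8.
lra.
Qed.

End Aux.
Arguments interp {R d mu L f x y g h}.
Arguments argmin_sub {R d mu L f xp g}.
Arguments combine {R d mu1 mu2 p1 p2 s sp lam kap k1 k2 f1 f2 x xp g1 g2 g2p}.


Theorem theorem2 (R : realType) (d : nat) (mu1 mu2 : R) (L1 L2 : \bar R)
  (f1 f2 : 'rV[R]_d -> R) :
  inF mu1 L1 f1 -> inF mu2 L2 f2 ->
  0 <= mu1 ->
  (* F = f1 - f2 bounded below *)
  (exists m : R, forall w, m <= f1 w - f2 w) ->
  (* dom (subdiff f1) nonempty and contained in dom (subdiff f2) *)
  (exists w g, subdiff mu1 f1 w g) ->
  (forall w, (exists g, subdiff mu1 f1 w g) -> exists g, subdiff mu2 f2 w g) ->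
  (* range (subdiff f2) contained in range (subdiff f1) *)
  (forall g, (exists w, subdiff mu2 f2 w g) -> exists w, subdiff mu1 f1 w g) ->
  (* at least one of f1, f2 is smooth *)
  (L1 < +oo \/ L2 < +oo)%E ->
  (0 < mu1 + mu2 \/ (mu1 = 0 /\ mu2 = 0)) ->
  forall (x xp g1 g2 g2p : 'rV[R]_d),
  (* one DCA step: g2 in subdiff f2 (x), xp in argmin f1 - <g2, .> *)
  subdiff mu2 f2 x g2 ->
  (forall w, f1 xp - dotv g2 xp <= f1 w - dotv g2 w) ->
  (* arbitrary g1 in subdiff f1 (x) (so x in dom subdiff f1), g2p in subdiff f2 (xp);
     g1p := g2 *)
  subdiff mu1 f1 x g1 ->
  subdiff mu2 f2 xp g2p ->
  let g1p := g2 in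
  let Fd := (f1 x - f2 x) - (f1 xp - f2 xp) in
  let bound (s sp : R) :=
    [/\ 0 <= s, 0 <= sp &
        s * 2^-1 * sqnorm (g1 - g2) + sp * 2^-1 * sqnorm (g1p - g2p) <= Fd] in
  (D1 mu1 mu2 L1 L2 -> bound (sigma1 mu1 L1 L2) (sigma1p mu1 L1 L2)) /\
  (D2 mu1 mu2 L1 L2 -> bound (sigma2 mu2 L1 L2) (sigma2p mu2 L1 L2)) /\
  (D3 mu1 mu2 L1 L2 -> bound (sigma3 mu1 mu2 L1 L2) (sigma3p mu2 L2)) /\
  (D4 mu1 mu2 L1 L2 -> bound (@sigma4 R) (sigma4p mu1 mu2)) /\
  (D5 mu1 mu2 L1 L2 -> bound (@sigma5 R) (sigma5p mu1 L2)) /\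
  (D6 mu1 mu2 L1 L2 -> bound (sigma6 mu2 L1) (@sigma6p R)).
Proof.
move=> hF1 hF2 m0 _ _ _ _ sm mp x xp g1 g2 g2p s2 am s1 s2p g1p Fd bound.
rewrite /bound /Fd /g1p.
have s1p := argmin_sub hF1 am.
have fA := interp hF1 s1p s1.
have fB := interp hF1 s1 s1p.
have fC := interp hF2 s2 s2p.
have fD := interp hF2 s2p s2.
have lt1 : (mu1%:E < L1)%E by case: hF1.
have lt2 : (mu2%:E < L2)%E by case: hF2.
have Hc : forall s sp, cert mu1 mu2 (pc mu1 L1) (pc mu2 L2) s sp ->
    s * 2^-1 * sqnorm (g1 - g2) + sp * 2^-1 * sqnorm (g2 - g2p)
      <= (f1 x - f2 x) - (f1 xp - f2 xp).
  move=> s sp [lam [kap [k1 [k2 [[a1 a2 a3 a4] [[b1 b2 b3 b4] tot]]]]]].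
  exact: (combine a1 b1 a2 b2 a3 b3 a4 b4 tot fA fB fC fD).
split; [|split; [|split; [|split; [|split]]]].
- move=> D; have [? [? ?]] := case1 _ _ _ _ _ lt1 lt2 m0 sm D; split => //; exact: Hc.
- move=> D; have [? [? ?]] := case2 _ _ _ _ _ lt1 lt2 m0 sm D; split => //; exact: Hc.
- move=> D; have [? [? ?]] := case3 _ _ _ _ _ lt1 lt2 m0 mp D; split => //; exact: Hc.
- move=> D; have [? [? ?]] := case4 _ _ _ _ _ lt1 lt2 m0 mp D; split => //; exact: Hc.
- move=> D; have [? [? ?]] := case5 _ _ _ _ _ lt1 lt2 m0 D; split => //; exact: Hc.
- move=> D; have [? [? ?]] := case6 _ _ _ _ _ lt1 lt2 m0 D; split => //; exact: Hc.
Qed.
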